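(* In the homogeneous UAV Persistent Service model ($g_i=g$, $2g<f$), under HoRR with $M=N+\lceil\frac{c+2g}{f-2g}N\rceil$ UAVs and $x=\frac{f-2g}{N}$, every UAV is instructed to recharge periodically: the difference between any two consecutive times at which the same UAV is instructed to recharge equals $$\left(N+\left\lceil\frac{2g+c}{x}\right\rceil\right)x .$$
   Context: UAV Persistent Service model: single recharging station (RS), $N$ aerial locations, identical UAVs with maximum flight time $f>0$, recharge/battery-swap time $c\ge0$, and flight time $g>0$ between the RS and every location, $2g<f$. HoRR schedule: with $x=\frac{f-2g}{N}$, at time $0$ one fully charged UAV is at each location and the remaining (backup) UAVs are fully charged at the RS. For each $k=1,2,\dots$, a fully charged backup departs the RS at time $kx-g$ and at time $kx$ replaces the serving UAV with least remaining energy (ties broken arbitrarily); the relieved UAV is ''instructed to recharge'' at time $kx$, flies back to the RS, recharges for $c$ time units, and then becomes a backup. Backups are dispatched in the order in which they became ready. *)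

(* Defs.v *)
From mathcomp Require Import all_boot all_order all_algebra.
Set Implicit Arguments. Unset Strict Implicit. Unset Printing Implicit Defensive.
Import Order.TTheory GRing.Theory Num.Theory.
Local Open Scope ring_scope.

(* A state of the system right after the replacement performed at time k*x
   (or at time 0 for the initial state):
   - [serv i]  : the UAV currently serving location i;
   - [ftime u] : the last time at which UAV u was fully charged and left the RS
                 (for the initially serving UAVs this is 0).  The remaining
                 energy of a serving UAV u at time t is f - (t - ftime u), so
                 "least remaining energy" = "smallest ftime";
   - [queue]   : the backups (at / on their way to the RS), in the order in
                 which they became ready (FIFO dispatch order). *)
Record state (N M : nat) (R : Type) := State {
  serv : 'I_N -> 'I_M;
  ftime : 'I_M -> R;
  queue : seq 'I_M
}.

Section HoRR.
Variables (R : realFieldType) (N M : nat).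

(* Initial configuration at time 0: one fully charged UAV at each location
   (distinct UAVs), all remaining UAVs are backups at the RS; since they are
   all ready at time 0 their dispatch order is arbitrary. *)
Definition initial_state (s : state N M R) : Prop :=
  injective (serv s) /\
  (forall i, ftime s (serv s i) = 0) /\
  uniq (queue s) /\
  (forall u, u \in queue s <-> ~ (exists i, serv s i = u)).

(* One step of HoRR at time k*x: the head d of the backup queue departs the RS
   at time k*x - g fully charged; at time k*x it replaces the UAV serving
   location i, where the UAV at i has least remaining energy (ties broken
   arbitrarily, i.e. any minimiser is allowed); the relieved UAV is appended to
   the queue (it becomes ready at k*x + g + c, after all earlier-relieved UAVs). *)
Definition horr_step (g x : R) (k : nat) (s : state N M R) (i : 'I_N)
  (s' : state N M R) : Prop :=
  (forall j, ftime s (serv s i) <= ftime s (serv s j)) /\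
  exists d rest, queue s = d :: rest /\
    serv s' = (fun j => if j == i then d else serv s j) /\
    ftime s' = (fun u => if u == d then k%:R * x - g else ftime s u) /\
    queue s' = rcons rest (serv s i).

(* A run of HoRR: a sequence of states and of replaced locations
   (the latter encode the arbitrary tie-breaking). *)
Definition horr_run (g x : R) (st : nat -> state N M R) (loc : nat -> 'I_N)
  : Prop :=
  initial_state (st 0%N) /\
  forall k, (0 < k)%N -> horr_step g x k (st k.-1) (loc k) (st k).

Definition instructed (st : nat -> state N M R) (loc : nat -> 'I_N)
  (u : 'I_M) (k : nat) : Prop :=
  (0 < k)%N /\ serv (st k.-1) (loc k) = u.

End HoRR.

(* Main.v *)
Require Import Defs.
From mathcomp Require Import all_boot all_order all_algebra.
From mathcomp Require Import ring lra zify.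
Import Order.TTheory GRing.Theory Num.Theory.
Local Open Scope ring_scope.
Set Implicit Arguments. Unset Strict Implicit. Unset Printing Implicit Defensive.

Section Aux.
Variables (R : realFieldType) (N M : nat) (g x : R).

Definition inv_ok (s : state N M R) :=
  injective (serv s) /\ uniq (queue s) /\
  (forall u, u \in queue s <-> ~ exists i, serv s i = u).

Lemma inq_notserv (s : state N M R) u j : inv_ok s -> u \in queue s -> serv s j <> u.
Proof. by move=> [_ [_ Hm]] /Hm H E; apply: H; exists j. Qed.

Lemma step_inv k (s s' : state N M R) (i : 'I_N) : horr_step g x k s i s' -> inv_ok s -> inv_ok s'.
Proof.
move=> [_ [d [rest [Hq [Hs [Hf Hq']]]]]] [Hinj [Hu Hm]].
rewrite /inv_ok Hq' Hs.
rewrite Hq in Hu Hm. move: Hu => /= /andP [dnr urest].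
have dns : forall j, serv s j <> d.
  by move=> j E; have /Hm := mem_head d rest; apply; exists j.
have sin : serv s i \notin rest.
  apply/negP => H. have : serv s i \in d :: rest by rewrite inE H orbT.
  by move/Hm; apply; exists i.
split.
  move=> j1 j2 /=; case: eqP => [-> | H1]; case: eqP => [-> // | H2].
  - by move=> E; exfalso; apply: (dns j2); rewrite E.
  - by move=> E; exfalso; apply: (dns j1).
  - by move/Hinj.
split; first by rewrite rcons_uniq sin urest.
move=> u; rewrite mem_rcons inE; split.
- case/orP => [/eqP -> | ur].
  + case=> j; case: eqP => [_ Hd| Hji Hj].
    * by apply: (dns i).
    * by apply: Hji; apply: Hinj.
  + case=> j; case: eqP => [_ Hd | _ Hj].
    * by move: dnr; rewrite Hd ur.
    * have : u \in d :: rest by rewrite inE ur orbT.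
      by move/Hm; apply; exists j.
- move=> H.
  case: (boolP [exists j, serv s j == u]) => [/existsP [j /eqP Hj] | Hn].
  + case: (eqVneq j i) => [Eji | Nji].
    * by rewrite -Hj Eji eqxx.
    * by exfalso; apply: H; exists j; rewrite (negbTE Nji).
  + have : u \in d :: rest.
      apply/Hm => -[j Hj]; move/existsP: Hn; apply; exists j; exact/eqP.
    rewrite inE => /orP [/eqP Ed | ->]; last by rewrite orbT.
    by exfalso; apply: H; exists i; rewrite eqxx Ed.
Qed.

Lemma step_size k (s s' : state N M R) (i : 'I_N) : horr_step g x k s i s' -> size (queue s') = size (queue s).
Proof. by move=> [_ [d [rest [Hq [Hs [Hf Hq']]]]]]; rewrite Hq Hq' size_rcons. Qed.

Lemma step_other k (s s' : state N M R) (i j : 'I_N) : horr_step g x k s i s' -> inv_ok s -> j != i ->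
  serv s' j = serv s j /\ ftime s' (serv s' j) = ftime s (serv s j).
Proof.
move=> [_ [d [rest [Hq [Hs [Hf Hq']]]]]] Hi Nji.
rewrite Hs Hf /= (negbTE Nji); split=> //.
case: eqP => // E; exfalso; apply: (@inq_notserv s d j Hi) => //; rewrite Hq; exact: mem_head.
Qed.

Lemma step_new k (s s' : state N M R) (i : 'I_N) : horr_step g x k s i s' ->
  ftime s' (serv s' i) = k%:R * x - g.
Proof. by move=> [_ [d [rest [Hq [Hs [Hf Hq']]]]]]; rewrite Hs Hf /= !eqxx. Qed.

Lemma step_min k (s s' : state N M R) (i : 'I_N) : horr_step g x k s i s' ->
  forall j, ftime s (serv s i) <= ftime s (serv s j).
Proof. by case. Qed.

Lemma step_qnext k (s s' : state N M R) (i : 'I_N) (u : 'I_M) p : horr_step g x k s i s' ->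
  nth u (queue s) p.+1 = u -> (p.+1 < size (queue s))%N ->
  nth u (queue s') p = u /\ (p < size (queue s'))%N.
Proof.
move=> [_ [d [rest [Hq [Hs [Hf Hq']]]]]]; rewrite Hq Hq' /= => Hn Hp.
have Hp' : (p < size rest)%N by [].
by rewrite nth_rcons size_rcons Hp' Hn; split=> //; apply: ltnW.
Qed.

Lemma step_qhead k (s s' : state N M R) (i : 'I_N) (u : 'I_M) : horr_step g x k s i s' ->
  nth u (queue s) 0 = u -> (0 < size (queue s))%N -> serv s' i = u.
Proof.
by move=> [_ [d [rest [Hq [Hs [Hf Hq']]]]]]; rewrite Hq Hs /= eqxx.
Qed.

Lemma step_qlast k (s s' : state N M R) (i : 'I_N) (u : 'I_M) : horr_step g x k s i s' -> serv s i = u ->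
  nth u (queue s') (size (queue s')).-1 = u /\ (0 < size (queue s'))%N.
Proof.
move=> [_ [d [rest [Hq [Hs [Hf Hq']]]]]] <-; rewrite Hq' size_rcons /=.
by rewrite nth_rcons ltnn eqxx.
Qed.

End Aux.

Section Run.
Variables (R : realFieldType) (N M : nat) (g x : R)
  (st : nat -> state N M R) (loc : nat -> 'I_N).

Lemma run_step : horr_run g x st loc -> forall k,
  horr_step g x k.+1 (st k) (loc k.+1) (st k.+1).
Proof. by move=> [_ H] k; apply: (H k.+1). Qed.

Lemma run_inv : horr_run g x st loc -> forall k, inv_ok (st k).
Proof.
move=> Hr; elim=> [|k IH].
  by case: Hr => -[Hi [_ [Hu Hm]]] _; split.
exact: step_inv (run_step Hr k) IH.
Qed.

Lemma run_size : horr_run g x st loc -> forall k,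
  size (queue (st k)) = size (queue (st 0)).
Proof.
move=> Hr; elim=> [//|k IH]; by rewrite (step_size (run_step Hr k)).
Qed.

Lemma queue_adv : horr_run g x st loc -> forall k m p (u : 'I_M),
  nth u (queue (st k)) (p + m) = u -> (p + m < size (queue (st k)))%N ->
  nth u (queue (st (k + m))) p = u /\ (p < size (queue (st (k + m))))%N.
Proof.
move=> Hr k; elim=> [|m IH] p u; first by rewrite !addn0.
rewrite addnS -addSn => Hn Hs.
have [Hn' Hs'] := IH _ _ Hn Hs.
rewrite addnS; exact: step_qnext (run_step Hr _) Hn' Hs'.
Qed.

Lemma dispatch : horr_run g x st loc -> forall k p (u : 'I_M),
  nth u (queue (st k)) p = u -> (p < size (queue (st k)))%N ->
  serv (st (k + p).+1) (loc (k + p).+1) = u /\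
  ftime (st (k + p).+1) u = (k + p).+1%:R * x - g.
Proof.
move=> Hr k p u Hn Hs.
have [Hn' Hs'] := queue_adv Hr (p := 0) Hn Hs.
have E := step_qhead (run_step Hr (k + p)) Hn' Hs'.
split=> //; rewrite -{1}E; exact: step_new (run_step Hr _).
Qed.

Lemma inq_not_instr : horr_run g x st loc -> forall k (u : 'I_M),
  u \in queue (st k) -> ~ instructed st loc u k.+1.
Proof.
move=> Hr k u Hq [_ /= E].
exact: (inq_notserv (run_inv Hr k) Hq E).
Qed.

End Run.

Section Period.
Variables (R : realFieldType) (N M : nat) (g x : R)
  (st : nat -> state N M R) (loc : nat -> 'I_N).

Lemma exact_period : horr_run g x st loc -> forall k j0 (t : R),
  (0 < N)%N ->
  ftime (st k) (serv (st k) j0) = t ->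
  (forall j, j != j0 -> ftime (st k) (serv (st k) j) < t) ->
  (forall k', (k < k')%N -> t < k'%:R * x - g) ->
  (forall m, (0 < m < N)%N -> ~ instructed st loc (serv (st k) j0) (k + m)) /\
  instructed st loc (serv (st k) j0) (k + N).
Proof.
move=> Hr k j0 t N0 Ht Hlt Hnew.
set v := serv (st k) j0.
pose P m := [/\ serv (st (k+m)) j0 = v, ftime (st (k+m)) v = t,
  (forall j, j != j0 -> ftime (st (k+m)) (serv (st (k+m)) j) != t),
  #|[set j | ftime (st (k+m)) (serv (st (k+m)) j) < t]| = (N.-1 - m)%N &
  (forall m', (0 < m' <= m)%N -> ~ instructed st loc v (k + m'))].
have HP : forall m, (m <= N.-1)%N -> P m.
  elim=> [_|m IH Hm].
    rewrite /P addn0; split=> //.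
    - by move=> j /Hlt; rewrite lt_neqAle => /andP [].
    - have -> : [set j | ftime (st k) (serv (st k) j) < t] = [set~ j0].
        apply/setP => j; rewrite !inE; case: (eqVneq j j0) => [->|/Hlt ->//].
        by rewrite Ht ltxx.
      by rewrite cardsC1 card_ord subn0.
    - by case=> [|m'] /andP [A B].
  have [Hs0 Hf0 Hne0 Hc0 Hni0] := IH (ltnW Hm).
  have Hs := run_step Hr (k + m).
  have Hi := run_inv Hr (k + m).
  set s := st (k + m) in Hs0 Hf0 Hne0 Hc0 Hs Hi.
  set i := loc (k + m).+1 in Hs.
  have : (0 < #|[set j | (ftime s (serv s j) < t)%R]|)%N by rewrite Hc0 subn_gt0.
  case/card_gt0P => j1; rewrite inE => Hj1.
  have Hmin : ftime s (serv s i) < t := le_lt_trans (step_min Hs j1) Hj1.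
  have Hsi : serv s i != v.
    by apply/eqP => E; move: Hmin; rewrite E Hf0 ltxx.
  have Hij0 : j0 != i by apply/eqP => E; move: Hsi; rewrite -E Hs0 eqxx.
  have [Es Ef] := step_other Hs Hi Hij0.
  have Hnw : t < ftime (st (k + m).+1) (serv (st (k + m).+1) i).
    by rewrite (step_new Hs); apply: Hnew; rewrite ltnS leq_addr.
  rewrite /P addnS; split.
  - by rewrite Es.
  - by rewrite -{1}Hs0 -Es Ef Hs0.
  - move=> j Nj; case: (eqVneq j i) => [->|Nji].
      by rewrite gt_eqF.
    by have [_ ->] := step_other Hs Hi Nji; apply: Hne0.
  - have -> : [set j | ftime (st (k + m).+1) (serv (st (k + m).+1) j) < t]
              = [set j | ftime s (serv s j) < t] :\ i.
      apply/setP => j; rewrite !inE; case: (eqVneq j i) => [->|Nji] /=.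
        by rewrite ltNge (ltW Hnw).
      by have [_ ->] := step_other Hs Hi Nji.
    move: Hc0; rewrite (cardsD1 i) inE Hmin /= => E.
    by rewrite subnS -E.
  - move=> m' /andP [A B]; rewrite leq_eqVlt in B; case/orP: B => [/eqP [->] | B].
      by rewrite addnS => -[_ /= E]; move/eqP: Hsi.
    by apply: Hni0; rewrite A.
have [Hs0 Hf0 Hne0 Hc0 Hni0] := HP _ (leqnn _).
split.
  move=> m /andP [A B]; apply: Hni0; rewrite A /=.
  by rewrite -ltnS prednK.
have Hs := run_step Hr (k + N.-1).
have Hi := run_inv Hr (k + N.-1).
set s := st (k + N.-1) in Hs0 Hf0 Hne0 Hc0 Hs Hi.
set i := loc (k + N.-1).+1 in Hs.
have EN : (k + N)%N = (k + N.-1).+1 by rewrite -addnS prednK.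
rewrite EN; split=> //=.
rewrite -/s -/i; case: (eqVneq i j0) => [->|Nij]; first by [].
exfalso.
have H1 := step_min Hs j0; rewrite Hs0 Hf0 in H1.
have H2 := Hne0 _ Nij.
have H3 : ~~ (ftime s (serv s i) < t).
  apply/negP => H; move: Hc0; rewrite subnn => /eqP; rewrite cards_eq0 => /eqP E.
  have Hin : i \in [set j | (ftime s (serv s j) < t)%R] by rewrite inE.
  by rewrite E inE in Hin.
by move: H3; rewrite lt_neqAle H2 H1.
Qed.

End Period.

Section Event.
Variables (R : realFieldType) (N M : nat) (g x : R)
  (st : nat -> state N M R) (loc : nat -> 'I_N).

Lemma eventually_instr : horr_run g x st loc -> forall n k j0 (t : R),
  ftime (st k) (serv (st k) j0) = t ->
  (forall k', (k < k')%N -> t < k'%:R * x - g) ->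
  (#|[set j | (ftime (st k) (serv (st k) j) <= t)%R]| <= n)%N ->
  exists k'', (k < k'')%N /\ instructed st loc (serv (st k) j0) k''.
Proof.
move=> Hr; elim=> [|n IH] k j0 t Ht Hnew Hc.
  have Hin : j0 \in [set j | (ftime (st k) (serv (st k) j) <= t)%R] by rewrite inE Ht.
  by move: Hc; rewrite leqn0 cards_eq0 => /eqP E; rewrite E inE in Hin.
have Hs := run_step Hr k.
have Hi := run_inv Hr k.
set s := st k in Ht Hc Hs Hi *.
set i := loc k.+1 in Hs.
case: (eqVneq (serv s i) (serv s j0)) => [E|Nsi].
  by exists k.+1; split=> //; split=> //=; rewrite -/s -/i E.
have Hij0 : j0 != i by apply/eqP => E; move: Nsi; rewrite E eqxx.
have [Es Ef] := step_other Hs Hi Hij0.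
have Hmin : ftime s (serv s i) <= t by rewrite -Ht; exact: step_min Hs j0.
have Hnw : t < ftime (st k.+1) (serv (st k.+1) i).
  by rewrite (step_new Hs); apply: Hnew.
have Hc' : (#|[set j | (ftime (st k.+1) (serv (st k.+1) j) <= t)%R]| <= n)%N.
  have -> : [set j | (ftime (st k.+1) (serv (st k.+1) j) <= t)%R]
            = [set j | (ftime s (serv s j) <= t)%R] :\ i.
    apply/setP => j; rewrite !inE; case: (eqVneq j i) => [->|Nji] /=.
      by rewrite leNgt Hnw.
    by have [_ ->] := step_other Hs Hi Nji.
  by move: Hc; rewrite (cardsD1 i) inE Hmin.
have [k'' [Hk Hin]] := IH k.+1 j0 t (etrans Ef Ht) (fun k' H => Hnew k' (ltnW H)) Hc'.
by exists k''; split; [exact: ltnW | rewrite -Es].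
Qed.

End Event.

Section Bound.
Variables (R : realFieldType) (N M : nat) (g x : R)
  (st : nat -> state N M R) (loc : nat -> 'I_N).

Lemma run_bound : horr_run g x st loc -> 0 < x -> forall k j,
  ftime (st k) (serv (st k) j) <= Num.max 0 (k%:R * x - g).
Proof.
move=> Hr x0; elim=> [|k IH] j.
  by case: Hr => -[_ [H0 _]] _; rewrite H0 le_max lexx.
have Hs := run_step Hr k.
case: (eqVneq j (loc k.+1)) => [->|Nj].
  by rewrite (step_new Hs) le_max lexx orbT.
have [_ ->] := step_other Hs (run_inv Hr k) Nj.
apply: (le_trans (IH j)); rewrite ge_max !le_max lexx /=; apply/orP; right.
rewrite lerD2r ler_pM2r // ler_nat; exact: leqnSn.
Qed.

Lemma natx_lt (k k' : nat) : 0 < x -> (k < k')%N -> k%:R * x < k'%:R * x.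
Proof. by move=> x0 H; rewrite ltr_pM2r // ltr_nat. Qed.

End Bound.

Theorem corollary1 (R : archiRealFieldType) (N M : nat) (f c g : R)
  (st : nat -> state N M R) (loc : nat -> 'I_N) :
  (0 < N)%N -> 0 < f -> 0 <= c -> 0 < g -> 2 * g < f ->
  M%:R = N%:R + (Num.ceil ((c + 2 * g) / (f - 2 * g) * N%:R))%:~R :> R ->
  let x := (f - 2 * g) / N%:R in
  horr_run g x st loc ->
  forall u : 'I_M,
    (exists k, instructed st loc u k) /\
    (forall k, instructed st loc u k ->
       exists k', (k < k')%N /\ instructed st loc u k') /\
    (forall k1 k2, (k1 < k2)%N ->
       instructed st loc u k1 -> instructed st loc u k2 ->
       (forall k, (k1 < k < k2)%N -> ~ instructed st loc u k) ->
       k2%:R * x - k1%:R * x = (N%:R + (Num.ceil ((2 * g + c) / x))%:~R) * x).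
Proof.
move=> N0 f0 c0 g0 fg HM x Hr u.
have Nr0 : (0 : R) < N%:R by rewrite ltr0n.
have x0 : 0 < x by rewrite /x divr_gt0 // subr_gt0.
set z := Num.ceil ((2 * g + c) / x).
have Ez : (c + 2 * g) / (f - 2 * g) * N%:R = (2 * g + c) / x.
  have H1 : f - 2 * g != 0 by rewrite gt_eqF // subr_gt0.
  rewrite /x; field; rewrite H1 gt_eqF //.
rewrite Ez -/z in HM.
set Q := size (queue (st 0)).
have HMQ : M = (N + Q)%N.
  case: (Hr) => -[Hinj [_ [Hu Hm]]] _.
  have := cardC (fun v : 'I_M => v \in codom (serv (st 0))).
  have -> : #|(fun v : 'I_M => v \in codom (serv (st 0)))| = #|codom (serv (st 0))|.
    by apply: eq_card.
  rewrite card_codom // !card_ord => <-; congr addn.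
  rewrite /Q -(card_uniqP Hu); apply: eq_card => v; rewrite !inE.
  apply/idP/idP.
    move=> Hv; apply/(proj2 (Hm v)) => -[j Hj]; move/negP: Hv; apply.
    by apply/codomP; exists j; rewrite Hj.
  move=> Hv; have H := proj1 (Hm v) Hv; apply/negP => /codomP [j Hj].
  by apply: H; exists j; rewrite Hj.
have HQz : Q%:R = z%:~R :> R.
  move: HM; rewrite HMQ natrD => H; apply: (addrI (N%:R)); exact: H.
have HQx : 2 * g + c <= Q%:R * x.
  rewrite HQz; have := ceil_ge ((2 * g + c) / x); rewrite -/z => H.
  by rewrite -(ler_pM2r x0) divfK ?gt_eqF // in H.
have HQg : g < Q%:R * x by lra.
have HQ1 : (0 < Q)%N.
  case: (posnP Q) => // E; move: HQg; rewrite E mul0r => H; lra.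
have Hsize k : size (queue (st k)) = Q by rewrite (run_size Hr).
have Hlt k k' : (k < k')%N -> k%:R * x < k'%:R * x by apply: natx_lt.
have Hge k : (Q <= k)%N -> g < k%:R * x.
  move=> H; apply: (lt_le_trans HQg); rewrite ler_pM2r // ler_nat //.
have Hper : forall k1, instructed st loc u k1 ->
    (forall k, (k1 < k < k1 + M)%N -> ~ instructed st loc u k) /\
    instructed st loc u (k1 + M).
  move=> k1 [k1p E]; have Ek1 : k1 = k1.-1.+1 by rewrite prednK.
  rewrite Ek1 in E; set k0 := k1.-1 in E Ek1.
  have [Hn Hs] := step_qlast (run_step Hr k0) E.
  rewrite -Ek1 Hsize in Hn Hs.
  have Hadv : forall m, (m <= Q.-1)%N -> u \in queue (st (k1 + m)).
    move=> m Hm.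
    have Hn' : nth u (queue (st k1)) (Q.-1 - m + m) = u by rewrite subnK.
    have Hs' : (Q.-1 - m + m < size (queue (st k1)))%N by rewrite subnK // Hsize prednK.
    have [A B] := queue_adv Hr Hn' Hs'.
    by rewrite -A mem_nth.
  have Hs'' : (Q.-1 < size (queue (st k1)))%N by rewrite Hsize prednK.
  have [Dv Df] := dispatch Hr Hn Hs''.
  have Ekd : (k1 + Q.-1).+1 = (k1 + Q)%N by rewrite -addnS prednK.
  rewrite Ekd in Dv Df.
  set kd := (k1 + Q)%N in Dv Df Ekd.
  have Hkd : (Q <= kd)%N by rewrite leq_addl.
  have F1 : ftime (st kd) (serv (st kd) (loc kd)) = kd%:R * x - g by rewrite Dv Df.
  have F2 : forall j, j != loc kd -> ftime (st kd) (serv (st kd) j) < kd%:R * x - g.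
    move=> j Nj.
    have Ekd' : kd = (k1 + Q.-1).+1 by [].
    have Hst := run_step Hr (k1 + Q.-1); rewrite Ekd -/kd in Hst.
    have [_ ->] := step_other Hst (run_inv Hr _) Nj.
    apply: (le_lt_trans (run_bound Hr x0 _ _)); rewrite gt_max.
    have Hl : (k1 + Q.-1 < kd)%N by rewrite Ekd'.
    have := Hge _ Hkd; have := Hlt (k1 + Q.-1)%N kd Hl.
    move=> H1 H2; apply/andP; split; lra.
  have F3 : forall k', (kd < k')%N -> kd%:R * x - g < k'%:R * x - g.
    move=> k' H; have := Hlt _ _ H; lra.
  have [P1 P2] := exact_period Hr N0 F1 F2 F3.
  rewrite Dv in P1 P2; split; last by have -> : (k1 + M = kd + N)%N by rewrite /kd; lia.
  move=> k /andP [A B].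
  case: (leqP k kd) => C.
    have -> : k = (k1 + (k - k1).-1).+1 by lia.
    apply: (inq_not_instr Hr); apply: Hadv; lia.
  have -> : k = (kd + (k - kd))%N by lia.
  apply: P1; lia.
have HM0 : (0 < M)%N by rewrite HMQ; lia.
split.
  set K := Q.-1.
  have HKQ : K.+1 = Q by rewrite prednK.
  have Hcard : forall k (t : R), (#|[set j | (ftime (st k) (serv (st k) j) <= t)%R]| <= N)%N.
    by move=> k t; apply: leq_trans (max_card _) _; rewrite card_ord.
  case: (boolP (u \in queue (st K))) => Hin.
    have Hp : (index u (queue (st K)) < size (queue (st K)))%N by rewrite index_mem.
    have [Dv Df] := dispatch Hr (nth_index u Hin) Hp.
    set kd := (K + index u (queue (st K))).+1 in Dv Df.
    have F1 : ftime (st kd) (serv (st kd) (loc kd)) = kd%:R * x - g by rewrite Dv Df.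
    have F3 : forall k', (kd < k')%N -> kd%:R * x - g < k'%:R * x - g.
      move=> k' H; have := Hlt _ _ H; lra.
    have [k'' [_ Hk]] := eventually_instr Hr F1 F3 (Hcard _ _).
    by exists k''; rewrite -Dv.
  have [j0 Hj0] : exists j0, serv (st K) j0 = u.
    case: (boolP [exists j, serv (st K) j == u]) => [/existsP [j /eqP Hj] | Hn].
      by exists j.
    exfalso; move/negP: Hin; apply; apply/(proj2 (proj2 (proj2 (run_inv Hr K)) u)).
    by move=> -[j Hj]; move/existsP: Hn; apply; exists j; apply/eqP.
  have F1 : ftime (st K) (serv (st K) j0) = ftime (st K) (serv (st K) j0) by [].
  have F3 : forall k', (K < k')%N -> ftime (st K) (serv (st K) j0) < k'%:R * x - g.
    move=> k' H; apply: (le_lt_trans (run_bound Hr x0 _ _)); rewrite gt_max.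
    have H2 : (Q <= k')%N by rewrite -HKQ.
    have := Hge _ H2; have := Hlt _ _ H => H3 H4; apply/andP; split; lra.
  have [k'' [_ Hk]] := eventually_instr Hr F1 F3 (Hcard _ _).
  by exists k''; rewrite -Hj0.
split.
  move=> k1 /Hper [_ H]; exists (k1 + M)%N; split=> //; lia.
move=> k1 k2 H12 I1 I2 Hnone.
have [Hn1 Hi1] := Hper _ I1.
have Ek2 : k2 = (k1 + M)%N.
  case: (ltngtP k2 (k1 + M)) => // C.
    by exfalso; apply: (Hn1 k2 _ I2); rewrite H12 C.
  by exfalso; apply: (Hnone (k1 + M)%N _ Hi1); rewrite C andbT; lia.
rewrite Ek2 HMQ !natrD HQz -/z; ring.
Qed.
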